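(* Let $q\in(-\infty,q_1)$ and let $P^{u,+}(q)$, $P^{u,-}(q)$ be the limits of $P_1^u(q-i\eta)$, resp. $P_1^u(q+i\eta)$, as $\eta\downarrow0$ (these are complex conjugate), and define $P^{v,\pm}(q)$ similarly from $P_1^v$. Suppose complex numbers $m(q),n(q),E$ and values $\ell_1(P^{u,\pm}(q))$, $\ell_2(P^{v,\pm}(q))$ satisfy, for both signs $\pm$, $$A(P^{u,\pm}(q),q)\,m(q)+\theta\,n(q)+C(P^{u,\pm}(q),q)\,\ell_1(P^{u,\pm}(q))+E=0,$$ $$B(P^{v,\pm}(q),q)\,m(q)-\theta\,n(q)+D(P^{v,\pm}(q),q)\,\ell_2(P^{v,\pm}(q))-E=0.$$ Put $\alpha=A(P^{u,+}(q),q)$, $\beta=B(P^{v,+}(q),q)$, $\gamma=C(P^{u,+}(q),q)$, $\delta=D(P^{v,+}(q),q)$ (so that $\bar\alpha=A(P^{u,-}(q),q)$ etc.), $\Delta(q)=-(\alpha+\beta)=-\theta(q+P^{u,+}(q)+P^{v,+}(q))$, and assume $\gamma\ne0$, $\delta\neq0$, $\Delta(q)\ne0$. Then, with $L^\pm(q)=\big(\ell_1(P^{u,\pm}(q)),\ell_2(P^{v,\pm}(q))\big)^{T}$, $$L^+(q)=G(q)L^-(q),\qquad G(q)=\frac{1}{\overline{\Delta(q)}}\begin{pmatrix}-\frac{\bar\gamma(\alpha+\bar\beta)}{\gamma}&\frac{\bar\delta(\bar\alpha-\alpha)}{\gamma}\\[2pt]\frac{\bar\gamma(\bar\beta-\b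eta)}{\delta}&-\frac{\bar\delta(\beta+\bar\alpha)}{\delta}\end{pmatrix}.$$
   Context: $\sigma_1,\sigma_2,\rho$ real with $\sigma_1\sigma_2-\rho^2>0$, $\theta=\frac{\sigma_1+\sigma_2-2\rho}{2}$, $\mu_1,\mu_2,r_1,r_2$ real. $U(p,q)=\theta p^2+\frac{\sigma_2}{2}q^2+(\sigma_2-\rho)pq+(\mu_2-\mu_1)p+\mu_2q$, $V(p,q)=\theta p^2+\frac{\sigma_1}{2}q^2+(\sigma_1-\rho)pq+(\mu_1-\mu_2)p+\mu_1q$; $A(p,q)=\frac{\theta(2p+q)}{2}+\frac{(\sigma_2-\sigma_1)q}{2}+\mu_2-\mu_1$, $B(p,q)=\frac{\theta(2p+q)}{2}+\frac{(\sigma_1-\sigma_2)q}{2}+\mu_1-\mu_2$, $C(p,q)=(1-r_1)p+q$, $D(p,q)=(1-r_2)p+q$. $q_1\le q_2$ are the real roots of $(\rho^2-\sigma_1\sigma_2)q^2+2[\mu_1(\rho-\sigma_2)+\mu_2(\rho-\sigma_1)]q+(\mu_1-\mu_2)^2=0$; $P_1^u$ (resp. $P_1^v$) is the root in $p$ of $U(p,q)=0$ (resp. $V(p,q)=0$) with the smaller real part, analytic on $\mathbb{C}\setminus((-\infty,q_1]\cup[q_2,\infty))$. In the application, $m,n$ are the diagonal Laplace transforms of the stationary density, $E$ a constant, and $\ell_1(p)=\int_{-\infty}^0e^{-pz}\nu_1(z)\mathrm{d}z$, $\ell_2(p)=\int_{-\infty}^0e^{-pz}\nu_2(z)\mathrm{d}z$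 (continued meromorphically) for the reflected Brownian motion in the three-quarter plane. *)

(* Defs.v *)
From Stdlib Require Import Reals ClassicalEpsilon.
From Coquelicot Require Import Coquelicot.
Open Scope R_scope.

Definition theta (s1 s2 rho : R) : R := (s1 + s2 - 2 * rho) / 2.

Open Scope C_scope.

Definition Uf (s1 s2 rho mu1 mu2 : R) (p q : C) : C :=
  RtoC (theta s1 s2 rho) * p * p + RtoC (s2 / 2) * q * q
  + RtoC (s2 - rho) * p * q + RtoC (mu2 - mu1) * p + RtoC mu2 * q.

Definition Vf (s1 s2 rho mu1 mu2 : R) (p q : C) : C :=
  RtoC (theta s1 s2 rho) * p * p + RtoC (s1 / 2) * q * q
  + RtoC (s1 - rho) * p * q + RtoC (mu1 - mu2) * p + RtoC mu1 * q.

Definition Af (s1 s2 rho mu1 mu2 : R) (p q : C) : C :=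
  RtoC (theta s1 s2 rho) * (2 * p + q) / 2 + RtoC (s2 - s1) * q / 2
  + RtoC (mu2 - mu1).

Definition Bf (s1 s2 rho mu1 mu2 : R) (p q : C) : C :=
  RtoC (theta s1 s2 rho) * (2 * p + q) / 2 + RtoC (s1 - s2) * q / 2
  + RtoC (mu1 - mu2).

Definition Cf (r1 : R) (p q : C) : C := RtoC (1 - r1) * p + q.
Definition Df (r2 : R) (p q : C) : C := RtoC (1 - r2) * p + q.

(* The root in p of K(p, z) = 0 having the smallest real part (chosen by
   Hilbert's epsilon; on the branch cuts, where the two roots have equal real
   parts, the choice is arbitrary -- it is irrelevant for the limits). *)
Definition small_root (K : C -> C -> C) (z : C) : C :=
  epsilon (inhabits (RtoC 0))
    (fun p => K p z = 0 /\ forall p', K p' z = 0 -> (Re p <= Re p')%R).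

Definition P1u (s1 s2 rho mu1 mu2 : R) : C -> C :=
  small_root (Uf s1 s2 rho mu1 mu2).
Definition P1v (s1 s2 rho mu1 mu2 : R) : C -> C :=
  small_root (Vf s1 s2 rho mu1 mu2).

Close Scope C_scope.

(* q1 = the smaller real root of
   (rho^2 - s1 s2) q^2 + 2[mu1(rho - s2) + mu2(rho - s1)] q + (mu1 - mu2)^2 = 0.
   The leading coefficient is < 0 and the discriminant is >= 0, so the smaller
   root is (-b + sqrt disc) / (2a). *)
Definition q1 (s1 s2 rho mu1 mu2 : R) : R :=
  let a := rho ^ 2 - s1 * s2 in
  let b := 2 * (mu1 * (rho - s2) + mu2 * (rho - s1)) in
  let c := (mu1 - mu2) ^ 2 in
  (- b + sqrt (b ^ 2 - 4 * a * c)) / (2 * a).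

Definition mat2 : Type := ((C * C) * (C * C))%type.
Definition mulmv (M : mat2) (v : C * C) : C * C :=
  let '((a, b), (c, d)) := M in
  let '(x, y) := v in ((a * x + b * y)%C, (c * x + d * y)%C).

Definition DeltaC (al be : C) : C := (- (al + be))%C.

Definition Gmat (al be ga de : C) : mat2 :=
  let Db := Cconj (DeltaC al be) in
  ((((- (Cconj ga * (al + Cconj be)) / ga) / Db)%C,
    ((Cconj de * (Cconj al - al) / ga) / Db)%C),
   (((Cconj ga * (Cconj be - be) / de) / Db)%C,
    ((- (Cconj de * (be + Cconj al)) / de) / Db)%C)).

(* Main.v *)
From Stdlib Require Import Reals ClassicalEpsilon Lra Psatz.
From Coquelicot Require Import Coquelicot.
Require Import Defs.
Open Scope R_scope.

Lemma Ceq (a b : C) : fst a = fst b -> snd a = snd b -> a = b.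
Proof. destruct a, b; simpl; intros; subst; reflexivity. Qed.

Lemma Csqrt_ex (w : C) : exists s : C, (s * s)%C = w.
Proof.
  destruct w as [x y].
  set (r := sqrt (x*x + y*y)).
  assert (Hr0 : 0 <= r) by apply sqrt_pos.
  assert (Hr2 : r * r = x*x+y*y) by (apply sqrt_sqrt; nra).
  assert (Hrx : Rabs x <= r).
  { rewrite <- sqrt_Rsqr_abs. apply sqrt_le_1_alt. unfold Rsqr. nra. }
  assert (Hp : 0 <= (r + x)/2) by (pose proof (Rle_abs (-x)); rewrite Rabs_Ropp in *; lra).
  assert (Hm : 0 <= (r - x)/2) by (pose proof (Rle_abs x); lra).
  set (u := sqrt ((r+x)/2)). set (v0 := sqrt ((r-x)/2)).
  assert (Hu : u*u = (r+x)/2) by apply sqrt_sqrt, Hp.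
  assert (Hv : v0*v0 = (r-x)/2) by apply sqrt_sqrt, Hm.
  assert (Huv : (2*u*v0)*(2*u*v0) = y*y) by nra.
  assert (Hu0 : 0 <= u) by apply sqrt_pos.
  assert (Hv0 : 0 <= v0) by apply sqrt_pos.
  destruct (Rle_dec 0 y).
  - exists (u, v0). unfold Cmult; simpl. apply Ceq; simpl.
    + nra.
    + assert (0 <= 2*u*v0) by nra. nra.
  - exists (u, -v0). unfold Cmult; simpl. apply Ceq; simpl.
    + nra.
    + assert (0 <= 2*u*v0) by nra. nra.
Qed.

Definition Kq (th k2 k1 k0 k3 : R) (p z : C) : C :=
  (RtoC th * p * p + RtoC k2 * z * z + RtoC k1 * p * z + RtoC k0 * p + RtoC k3 * z)%C.

Lemma Kq_conj th k2 k1 k0 k3 p z :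
  Kq th k2 k1 k0 k3 (Cconj p) (Cconj z) = Cconj (Kq th k2 k1 k0 k3 p z).
Proof. destruct p, z; unfold Kq, Cconj, Cmult, Cplus, RtoC; apply Ceq; simpl; ring. Qed.

Lemma Cmult_eq0 (a b : C) : (a * b = 0)%C -> a = 0%C \/ b = 0%C.
Proof.
  intros H. destruct (Ceq_dec a 0) as [|Ha]; [now left|right].
  rewrite <- (Cmult_1_l b), <- (Cinv_l a Ha), <- Cmult_assoc, H. ring.
Qed.

Definition bq (k1 k0 : R) (z : C) : C := (RtoC k1 * z + RtoC k0)%C.
Definition Dq (th k2 k1 k0 k3 : R) (z : C) : C :=
  (bq k1 k0 z * bq k1 k0 z - 4 * RtoC th * (RtoC k2 * z * z + RtoC k3 * z))%C.

Lemma Kq_id th k2 k1 k0 k3 p z :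
  (4 * RtoC th * Kq th k2 k1 k0 k3 p z =
   (2 * RtoC th * p + bq k1 k0 z) * (2 * RtoC th * p + bq k1 k0 z) - Dq th k2 k1 k0 k3 z)%C.
Proof. unfold Kq, Dq, bq. ring. Qed.

Lemma RtoC_neq (r : R) : r <> 0 -> RtoC r <> 0%C.
Proof. intros H E. apply H. injection E. auto. Qed.

Lemma Kq_min_ex th k2 k1 k0 k3 z : th <> 0 ->
  exists p, Kq th k2 k1 k0 k3 p z = 0%C /\
   forall p', Kq th k2 k1 k0 k3 p' z = 0%C -> Re p <= Re p'.
Proof.
  intros Hth.
  assert (H2th : (2 * RtoC th)%C <> 0%C).
  { replace (2 * RtoC th)%C with (RtoC (2*th)). apply RtoC_neq; lra.
    unfold RtoC, Cmult; apply Ceq; simpl; ring. }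
  assert (H4th : (4 * RtoC th)%C <> 0%C).
  { replace (4 * RtoC th)%C with (RtoC (4*th)). apply RtoC_neq; lra.
    unfold RtoC, Cmult; apply Ceq; simpl; ring. }
  assert (Hth' : RtoC th <> 0%C) by (apply RtoC_neq; exact Hth).
  set (b := bq k1 k0 z). set (D := Dq th k2 k1 k0 k3 z).
  destruct (Csqrt_ex D) as [s Hs].
  set (r1 := ((s - b) / (2 * RtoC th))%C).
  set (r2 := ((-s - b) / (2 * RtoC th))%C).
  assert (Hroot : forall p, Kq th k2 k1 k0 k3 p z = 0%C <-> p = r1 \/ p = r2).
  { intros p. split.
    - intros Hk.
      assert (Hf : ((2 * RtoC th * p + b - s) * (2 * RtoC th * p + b + s) = 0)%C).
      { transitivity (4 * RtoC th * Kq th k2 k1 k0 k3 p z + (D - s * s))%C.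
        rewrite Kq_id. fold b D. ring. rewrite Hk, Hs. ring. }
      destruct (Cmult_eq0 _ _ Hf) as [E|E].
      + left. unfold r1. replace (s - b)%C with (2 * RtoC th * p)%C.
        field; auto.
        rewrite <- (Cplus_0_r (s - b)%C), <- E. ring.
      + right. unfold r2. replace (-s - b)%C with (2 * RtoC th * p)%C.
        field; auto.
        rewrite <- (Cplus_0_r (-s - b)%C), <- E. ring.
    - intros Hp.
      assert (E2 : ((2 * RtoC th * p + b) * (2 * RtoC th * p + b) = s * s)%C).
      { destruct Hp; subst p; [unfold r1|unfold r2]; field; auto. }
      assert (E3 : (4 * RtoC th * Kq th k2 k1 k0 k3 p z = 0)%C).
      { rewrite Kq_id. fold b D. rewrite E2, Hs. ring. }
      destruct (Cmult_eq0 _ _ E3) as [E|E]; [contradiction|exact E]. }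
  destruct (Rle_dec (Re r1) (Re r2)).
  - exists r1. split. apply Hroot; auto.
    intros p' Hp'. apply Hroot in Hp'. destruct Hp'; subst; lra.
  - exists r2. split. apply Hroot; auto.
    intros p' Hp'. apply Hroot in Hp'. destruct Hp'; subst; lra.
Qed.

Lemma Kq_two th k2 k1 k0 k3 p p' z :
  Kq th k2 k1 k0 k3 p z = 0%C -> Kq th k2 k1 k0 k3 p' z = 0%C ->
  p <> p' -> Re p = Re p' -> Im (Dq th k2 k1 k0 k3 z) = 0.
Proof.
  intros H1 H2 Hne HRe.
  set (S := (RtoC th * (p + p') + bq k1 k0 z)%C).
  assert (HS : ((p - p') * S = 0)%C).
  { transitivity (Kq th k2 k1 k0 k3 p z - Kq th k2 k1 k0 k3 p' z)%C.
    unfold S, Kq, bq. ring. rewrite H1, H2. ring. }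
  destruct (Cmult_eq0 _ _ HS) as [E|E].
  { exfalso. apply Hne. rewrite <- (Cplus_0_r p'), <- E. ring. }
  assert (HD : Dq th k2 k1 k0 k3 z = (RtoC th * RtoC th * (p - p') * (p - p'))%C).
  { transitivity (RtoC th * RtoC th * (p - p') * (p - p') + S * (S + 2 * RtoC th * (p - p'))
                  - 4 * RtoC th * Kq th k2 k1 k0 k3 p z)%C.
    unfold S, Dq, Kq, bq. ring. rewrite E, H1. ring. }
  rewrite HD. destruct p as [a1 b1], p' as [a2 b2]. unfold Re in HRe; simpl in HRe.
  subst a2. unfold Im, RtoC, Cmult, Cminus, Cplus, Copp; simpl. ring.
Qed.

Lemma small_root_conj th k2 k1 k0 k3 z : th <> 0 -> Im (Dq th k2 k1 k0 k3 z) <> 0 ->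
  small_root (Kq th k2 k1 k0 k3) (Cconj z) = Cconj (small_root (Kq th k2 k1 k0 k3) z).
Proof.
  intros Hth HD. unfold small_root.
  set (w := epsilon _ (fun p => Kq th k2 k1 k0 k3 p z = 0%C /\ _)).
  set (w' := epsilon _ (fun p => Kq th k2 k1 k0 k3 p (Cconj z) = 0%C /\ _)).
  destruct (epsilon_spec (inhabits (RtoC 0)) _ (Kq_min_ex th k2 k1 k0 k3 z Hth)) as [Hw Hwm].
  destruct (epsilon_spec (inhabits (RtoC 0)) _ (Kq_min_ex th k2 k1 k0 k3 (Cconj z) Hth))
    as [Hw' Hwm'].
  fold w in Hw, Hwm. fold w' in Hw', Hwm'.
  assert (Hc1 : Kq th k2 k1 k0 k3 (Cconj w) (Cconj z) = 0%C).
  { rewrite Kq_conj, Hw. apply Ceq; simpl; lra. }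
  assert (Hc2 : Kq th k2 k1 k0 k3 (Cconj w') z = 0%C).
  { rewrite <- (Cconj_conj z). rewrite Kq_conj, Hw'. apply Ceq; simpl; lra. }
  pose proof (Hwm' _ Hc1) as L1. pose proof (Hwm _ Hc2) as L2.
  rewrite re_conj in L1, L2.
  destruct (Ceq_dec w (Cconj w')) as [E|E].
  - rewrite E, Cconj_conj. reflexivity.
  - exfalso. apply HD. apply (Kq_two th k2 k1 k0 k3 w (Cconj w') z); auto.
    rewrite re_conj. lra.
Qed.
Lemma Cconj_cont (x : C) : filterlim Cconj (locally x) (locally (Cconj x)).
Proof.
  apply filterlim_locally. intros eps.
  exists eps. intros [y1 y2] [H1 H2]. destruct x as [x1 x2].
  split; simpl in *.
  - exact H1.
  - revert H2. unfold ball; simpl. unfold AbsRing_ball, abs, minus, plus, opp; simpl.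
    intros H. replace (- y2 + - - x2)%R with (- (y2 + - x2))%R by ring.
    rewrite Rabs_Ropp. exact H.
Qed.

Lemma lim_conj (f g : R -> C) (l1 l2 : C) :
  (forall eta, 0 < eta -> g eta = Cconj (f eta)) ->
  filterlim f (at_right 0) (locally l1) -> filterlim g (at_right 0) (locally l2) ->
  l2 = Cconj l1.
Proof.
  intros Hfg Hf Hg.
  apply (filterlim_locally_unique (F := at_right 0) g); [exact Hg|].
  apply (filterlim_ext_loc (fun eta => Cconj (f eta))).
  - exists (mkposreal 1 Rlt_0_1). intros y _ Hy. symmetry. apply Hfg. exact Hy.
  - eapply filterlim_comp. exact Hf. apply Cconj_cont.
Qed.

Lemma P1u_eq s1 s2 rho mu1 mu2 :
  P1u s1 s2 rho mu1 mu2 = small_root (Kq (theta s1 s2 rho) (s2/2) (s2-rho) (mu2-mu1) mu2).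
Proof. reflexivity. Qed.
Lemma P1v_eq s1 s2 rho mu1 mu2 :
  P1v s1 s2 rho mu1 mu2 = small_root (Kq (theta s1 s2 rho) (s1/2) (s1-rho) (mu1-mu2) mu1).
Proof. reflexivity. Qed.

Lemma conj_pm (q eta : R) : (RtoC q + RtoC eta * Ci)%C = Cconj (RtoC q - RtoC eta * Ci)%C.
Proof. unfold Cconj, RtoC, Ci, Cmult, Cplus, Cminus, Copp; apply Ceq; simpl; ring. Qed.

Lemma ImD (th k2 k1 k0 k3 q eta : R) :
  Im (Dq th k2 k1 k0 k3 (RtoC q - RtoC eta * Ci)%C) =
  - eta * (2*k1^2*q + 2*k1*k0 - 8*th*k2*q - 4*th*k3).
Proof. unfold Dq, bq, Im, RtoC, Ci, Cmult, Cplus, Cminus, Copp; simpl. ring. Qed.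
Lemma Af_conj s1 s2 rho mu1 mu2 p (q : R) :
  Af s1 s2 rho mu1 mu2 (Cconj p) q = Cconj (Af s1 s2 rho mu1 mu2 p q).
Proof. destruct p. unfold Af, Cconj, Cdiv, Cinv, Cmult, Cplus, RtoC; apply Ceq; simpl; field. Qed.
Lemma Bf_conj s1 s2 rho mu1 mu2 p (q : R) :
  Bf s1 s2 rho mu1 mu2 (Cconj p) q = Cconj (Bf s1 s2 rho mu1 mu2 p q).
Proof. destruct p. unfold Bf, Cconj, Cdiv, Cinv, Cmult, Cplus, RtoC; apply Ceq; simpl; field. Qed.
Lemma Cf_conj r p (q : R) : Cf r (Cconj p) q = Cconj (Cf r p q).
Proof. destruct p. unfold Cf, Cconj, Cmult, Cplus, RtoC; apply Ceq; simpl; ring. Qed.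
Lemma Df_conj r p (q : R) : Df r (Cconj p) q = Cconj (Df r p q).
Proof. destruct p. unfold Df, Cconj, Cmult, Cplus, RtoC; apply Ceq; simpl; ring. Qed.

Open Scope C_scope.
Lemma Csub0 (a b : C) : a - b = 0 -> a = b.
Proof. intros H. transitivity (b + (a - b)). ring. rewrite H. ring. Qed.
Lemma alg (al be ga de m n E x1 x2 y1 y2 T : C) :
  al*m + T*n + ga*x1 + E = 0 -> Cconj al * m + T*n + Cconj ga * y1 + E = 0 ->
  be*m - T*n + de*x2 - E = 0 -> Cconj be*m - T*n + Cconj de * y2 - E = 0 ->
  ga <> 0 -> de <> 0 -> DeltaC al be <> 0 -> (x1,x2) = mulmv (Gmat al be ga de) (y1,y2).
Proof.
  intros H1 H2 H3 H4 Hga Hde HD.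
  unfold mulmv, Gmat.
  assert (HDb : Cconj (DeltaC al be) = - (Cconj al + Cconj be)).
  { unfold DeltaC. rewrite Copp_conj, Cplus_conj. reflexivity. }
  assert (HDb0 : Cconj (DeltaC al be) <> 0).
  { intro Z. apply HD. rewrite <- (Cconj_conj (DeltaC al be)), Z.
    apply Ceq; simpl; lra. }
  rewrite HDb in *. set (al' := Cconj al) in *. set (be' := Cconj be) in *.
  set (ga' := Cconj ga) in *. set (de' := Cconj de) in *.
  set (Db := - (al' + be')) in *.
  assert (K1 : ga * Db * x1 = - (ga' * (al + be')) * y1 + de' * (al' - al) * y2).
  { assert (Z : ga * Db * x1 - (- (ga' * (al + be')) * y1 + de' * (al' - al) * y2)
         = Db * ((al*m + T*n + ga*x1 + E) - (al' * m + T*n + ga' * y1 + E))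
           + (al - al') * ((al' * m + T*n + ga' * y1 + E) + (be'*m - T*n + de' * y2 - E)))
      by (unfold Db; ring).
    rewrite H1, H2, H4 in Z.
    apply Csub0. rewrite Z. ring. }
  assert (K2 : de * Db * x2 = ga' * (be' - be) * y1 - (de' * (be + al')) * y2).
  { assert (Z : de * Db * x2 - (ga' * (be' - be) * y1 - (de' * (be + al')) * y2)
         = Db * ((be*m - T*n + de*x2 - E) - (be'*m - T*n + de' * y2 - E))
           + (be - be') * ((al' * m + T*n + ga' * y1 + E) + (be'*m - T*n + de' * y2 - E)))
      by (unfold Db; ring).
    rewrite H3, H2, H4 in Z.
    apply Csub0. rewrite Z. ring. }
  f_equal.
  - transitivity ((ga*Db*x1)/(ga*Db)). field; auto. rewrite K1. field; auto.
  - transitivity ((de*Db*x2)/(de*Db)). field; auto. rewrite K2. field; auto.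
Qed.

Close Scope C_scope.

Theorem theorem4p4
  (s1 s2 rho mu1 mu2 r1 r2 : R) (Hcov : s1 * s2 - rho ^ 2 > 0)
  (q : R) (Hq : q < q1 s1 s2 rho mu1 mu2)
  (Pup Pum Pvp Pvm : C)
  (HPup : filterlim (fun eta : R => P1u s1 s2 rho mu1 mu2 (RtoC q - RtoC eta * Ci)%C)
            (at_right 0) (locally Pup))
  (HPum : filterlim (fun eta : R => P1u s1 s2 rho mu1 mu2 (RtoC q + RtoC eta * Ci)%C)
            (at_right 0) (locally Pum))
  (HPvp : filterlim (fun eta : R => P1v s1 s2 rho mu1 mu2 (RtoC q - RtoC eta * Ci)%C)
            (at_right 0) (locally Pvp))
  (HPvm : filterlim (fun eta : R => P1v s1 s2 rho mu1 mu2 (RtoC q + RtoC eta * Ci)%C)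
            (at_right 0) (locally Pvm))
  (m n E : C) (l1 l2 : C -> C)
  (Hup : (Af s1 s2 rho mu1 mu2 Pup q * m + RtoC (theta s1 s2 rho) * n
          + Cf r1 Pup q * l1 Pup + E = 0)%C)
  (Hum : (Af s1 s2 rho mu1 mu2 Pum q * m + RtoC (theta s1 s2 rho) * n
          + Cf r1 Pum q * l1 Pum + E = 0)%C)
  (Hvp : (Bf s1 s2 rho mu1 mu2 Pvp q * m - RtoC (theta s1 s2 rho) * n
          + Df r2 Pvp q * l2 Pvp - E = 0)%C)
  (Hvm : (Bf s1 s2 rho mu1 mu2 Pvm q * m - RtoC (theta s1 s2 rho) * n
          + Df r2 Pvm q * l2 Pvm - E = 0)%C)
  (Hga : Cf r1 Pup q <> RtoC 0)
  (Hde : Df r2 Pvp q <> RtoC 0)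
  (HDelta : DeltaC (Af s1 s2 rho mu1 mu2 Pup q) (Bf s1 s2 rho mu1 mu2 Pvp q) <> RtoC 0) :
  (l1 Pup, l2 Pvp) =
  mulmv (Gmat (Af s1 s2 rho mu1 mu2 Pup q) (Bf s1 s2 rho mu1 mu2 Pvp q)
              (Cf r1 Pup q) (Df r2 Pvp q))
        (l1 Pum, l2 Pvm).
Proof.
  set (th := theta s1 s2 rho).
  assert (Hth : th <> 0).
  { unfold th, theta. intro E0. assert (Hs : s1 + s2 = 2 * rho) by lra.
    assert (Hr : rho = (s1 + s2) / 2) by lra. rewrite Hr in Hcov.
    assert (0 <= (s1 - s2) * (s1 - s2)) by apply Rle_0_sqr.
    simpl in Hcov. lra. }
  set (a := rho ^ 2 - s1 * s2).
  set (b0 := 2 * (mu1 * (rho - s2) + mu2 * (rho - s1))).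
  assert (Hpos : 2 * a * q + b0 > 0).
  { unfold q1 in Hq. fold a b0 in Hq.
    set (c := (mu1 - mu2) ^ 2) in Hq.
    pose proof (sqrt_pos (b0 ^ 2 - 4 * a * c)).
    assert (Ha : 2 * a < 0) by (unfold a; lra).
    apply (Rmult_lt_compat_l (- (2*a))) in Hq; [|lra].
    replace (- (2 * a) * ((- b0 + sqrt (b0 ^ 2 - 4 * a * c)) / (2 * a)))
      with (b0 - sqrt (b0 ^ 2 - 4 * a * c)) in Hq by (field; lra).
    lra. }
  assert (Hum' : Pum = Cconj Pup).
  { refine (lim_conj _ _ _ _ _ HPup HPum). intros eta Heta. simpl. rewrite conj_pm, P1u_eq. apply small_root_conj; [exact Hth|].
    rewrite ImD. fold th. intro E0. apply Rmult_integral in E0. destruct E0 as [E0|E0]; [lra|].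
    revert E0. fold a b0 in Hpos. unfold th, theta, a, b0 in *.
    intro E0. apply Rgt_not_eq in Hpos. apply Hpos. rewrite <- E0. field. }
  assert (Hvm' : Pvm = Cconj Pvp).
  { refine (lim_conj _ _ _ _ _ HPvp HPvm). intros eta Heta. simpl. rewrite conj_pm, P1v_eq. apply small_root_conj; [exact Hth|].
    rewrite ImD. fold th. intro E0. apply Rmult_integral in E0. destruct E0 as [E0|E0]; [lra|].
    revert E0. fold a b0 in Hpos. unfold th, theta, a, b0 in *.
    intro E0. apply Rgt_not_eq in Hpos. apply Hpos. rewrite <- E0. field. }
  rewrite Hum', Hvm' in *.
  rewrite Af_conj, Cf_conj in Hum. rewrite Bf_conj, Df_conj in Hvm.
  apply (alg _ _ _ _ m n E _ _ _ _ (RtoC (theta s1 s2 rho))); auto.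
Qed.
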